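(* If $\lambda$ is a strict partition ($\lambda_1>\lambda_2>\cdots>\lambda_n\ge0$), then the number of gapless $\lambda$-keys is the Catalan number $C_n=\frac{1}{n+1}\binom{2n}{n}$.
   Context: Fix $n\ge1$, $[m]=\{1,\dots,m\}$. A partition is $\lambda=(\lambda_1\ge\cdots\ge\lambda_n\ge0)\in\mathbb{Z}^n$; its boxes are $(j,i)$ (column $j$, row $i$) with $1\le j\le\lambda_1$, $1\le i\le\zeta_j:=\#\{i:\lambda_i\ge j\}$. A tableau of shape $\lambda$ fills the boxes with values in $[n]$, strictly increasing down columns and weakly increasing along rows. A $\lambda$-key is a tableau $Y$ of shape $\lambda$ such that the set of entries of column $l$ contains the set of entries of column $j$ whenever $l\le j$. Let $q_1<\dots<q_r$ be the distinct column lengths of $\lambda$ less than $n$. A $\lambda$-key $Y$ is gapless if for every $h\in[r-1]$: letting $b$ be the smallest value in the columns of length $q_{h+1}$ that does not appear in the columns of length $q_h$, and $m$ the largest value in the columns of length $q_h$, if $b\le m$ then every column of length $q_{h+1}$ contains all of $b,b+1,\dots,m$. *)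

(* Defs.v *)
From mathcomp Require Import all_boot.
Set Implicit Arguments. Unset Strict Implicit. Unset Printing Implicit Defensive.

(* A partition lambda = (lambda_1 >= ... >= lambda_n >= 0) is a seq nat of size n;
   lambda_i = nth 0 lam (i-1).  Columns j and rows i are 1-indexed. *)

Definition ncols (lam : seq nat) : nat := nth 0 lam 0.

Definition zeta (lam : seq nat) (j : nat) : nat := count (fun x => j <= x) lam.

Definition isbox (lam : seq nat) (j i : nat) : bool :=
  [&& 1 <= j, j <= ncols lam, 1 <= i & i <= zeta lam j].

(* A filling: position (j,i) (column j, row i, 1 <= j <= lambda_1, 1 <= i <= n)
   is stored at index (j-1, i-1); the value 0 means "no box", values 1..n are
   entries in [n]. *)
Definition filling (n : nat) (lam : seq nat) := {ffun 'I_(ncols lam) * 'I_n -> 'I_n.+1}.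

Definition ent n (lam : seq nat) (T : filling n lam) (j i : nat) : nat :=
  if (0 < j) && (0 < i) then
    match insub j.-1 : option 'I_(ncols lam), insub i.-1 : option 'I_n with
    | Some a, Some b => nat_of_ord (T (a, b))
    | _, _ => 0
    end
  else 0.

Definition is_tableau n (lam : seq nat) (T : filling n lam) : bool :=
  [&& [forall p : 'I_(ncols lam) * 'I_n,
         (nat_of_ord (T p) != 0) == isbox lam (p.1).+1 (p.2).+1],
      [forall j : 'I_(ncols lam).+1, forall i : 'I_n.+1,
         isbox lam j i.+1 ==> (ent T j i < ent T j i.+1) || (i == 0 :> nat)] &
      [forall j : 'I_(ncols lam).+1, forall i : 'I_n.+1,
         isbox lam j.+1 i ==> (ent T j i <= ent T j.+1 i) || (j == 0 :> nat)]].

Definition colset n (lam : seq nat) (T : filling n lam) (j : nat) : seq nat :=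
  [seq ent T j i | i <- iota 1 (zeta lam j)].

Definition is_key n (lam : seq nat) (T : filling n lam) : bool :=
  is_tableau T &&
  [forall l : 'I_(ncols lam).+1, forall j : 'I_(ncols lam).+1,
     [&& 1 <= l, l <= j & j <= ncols lam] ==>
       all (fun x => x \in colset T l) (colset T j)].

Definition qlist n (lam : seq nat) : seq nat :=
  sort leq (undup [seq zeta lam j | j <- iota 1 (ncols lam) & zeta lam j < n]).

Definition cols_of_len (lam : seq nat) (q : nat) : seq nat :=
  [seq j <- iota 1 (ncols lam) | zeta lam j == q].

Definition vals_len n (lam : seq nat) (T : filling n lam) (q : nat) : seq nat :=
  flatten [seq colset T j | j <- cols_of_len lam q].

Definition gapless_at n (lam : seq nat) (T : filling n lam) (h : nat) : bool :=
  let qh := nth 0 (qlist n lam) h.-1 in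
  let qh1 := nth 0 (qlist n lam) h in
  let b := head 0 (sort leq [seq x <- vals_len T qh1 | x \notin vals_len T qh]) in
  let m := foldr maxn 0 (vals_len T qh) in
  (b <= m) ==>
    all (fun j => all (fun x => x \in colset T j) (iota b (m.+1 - b)))
        (cols_of_len lam qh1).

Definition gapless n (lam : seq nat) (T : filling n lam) : bool :=
  all (gapless_at T) (iota 1 (size (qlist n lam)).-1).

Definition catalan (n : nat) : nat := 'C(n.*2, n) %/ n.+1.

(* Main.v *)
Require Import Defs.
From mathcomp Require Import all_boot zify.
Set Implicit Arguments. Unset Strict Implicit. Unset Printing Implicit Defensive.


Definition Kr (n r : nat) : nat :=
  match n with 0 => 1 | n'.+1 => 'C(n'.*2.+2 + r, n'.+1) - 'C(n'.*2.+2 + r, n') end.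

Lemma bin_mono N k : k.*2.+1 <= N -> 'C(N, k) <= 'C(N, k.+1).
Proof.
move=> h. have := mul_bin_left N k.
have hk : k.+1 <= N - k by lia.
move=> e. rewrite -(@leq_pmul2l k.+1) // e. by apply: leq_mul.
Qed.

Lemma Kr_R1 n r : Kr n.+1 r.+1 = Kr n.+1 r + Kr n r.+2.
Proof.
rewrite /Kr.
have e1 := binS (n.*2.+2 + r) n.
have e2 : 'C((n.*2.+2 + r).+1, n.+1) = 'C(n.*2.+2 + r, n.+1) + 'C(n.*2.+2 + r, n).
  by rewrite binS.
have m1 := @bin_mono (n.*2.+2 + r) n ltac:(lia).
have m2 := @bin_mono (n.*2.+2 + r.+1) n ltac:(lia).
rewrite -!addSnnS.
case: n e1 e2 m1 m2 => [|n] e1 e2 m1 m2.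
  simpl in *. rewrite ?bin0 ?bin1 in e1 e2 m1 m2 *. lia.
have e3 := binS (n.+1.*2.+2 + r) n.
have m3 := @bin_mono (n.+1.*2.+2 + r) n ltac:(lia).
have m4 := @bin_mono (n.*2.+2 + r.+2) n ltac:(lia).
have -> : n.*2.+2 + r.+2 = n.+1.*2.+2 + r by lia.
have -> : n.+1.*2.+3 + r = (n.+1.*2.+2 + r).+1 by [].
lia.
Qed.

Lemma Kr_R0 n : Kr n.+1 0 = Kr n 1.
Proof.
rewrite /Kr addn0.
case: n => [|n]; first by rewrite /= bin0 bin1.
have e1 := binS (n.+1.*2.+1) n.+1.
have e2 := binS (n.+1.*2.+1) n.
have s : 'C(n.+1.*2.+1, n.+2) = 'C(n.+1.*2.+1, n.+1).
  rewrite -bin_sub; last by lia.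
  by have -> : n.+1.*2.+1 - n.+2 = n.+1 by lia.
have m := @bin_mono (n.+1.*2.+1) n ltac:(lia).
have -> : n.*2.+2 + 1 = n.+1.*2.+1 by lia.
lia.
Qed.

Definition conv (f g : nat -> nat) (n : nat) := \sum_(0 <= k < n.+1) f k * g (n - k).

Lemma eq_conv f f' g g' n : (forall k, k <= n -> f k = f' k) ->
  (forall k, k <= n -> g k = g' k) -> conv f g n = conv f' g' n.
Proof.
move=> hf hg; rewrite /conv big_nat_cond [RHS]big_nat_cond.
apply: eq_bigr => k /andP[/andP[_ hk] _].
by rewrite hf ?hg // ?leq_subr // -ltnS.
Qed.

Lemma conv_assoc f g h n : conv (conv f g) h n = conv f (conv g h) n.
Proof.
rewrite /conv.
transitivity (\sum_(0 <= k < n.+1) \sum_(0 <= j < n.+1 | true && (j < k.+1)) f j * g (k - j) * h (n - k)).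
  rewrite big_nat_cond [RHS]big_nat_cond.
  apply: eq_bigr => k /andP[/andP[_ hk] _].
  by rewrite big_distrl -big_nat_widen.
rewrite (exchange_big_dep_nat predT) //=.
rewrite big_nat_cond [RHS]big_nat_cond.
apply: eq_bigr => j /andP[/andP[_ hj] _].
rewrite big_distrr /=.
rewrite -(@big_nat_widenl _ _ _ j 0 n.+1 predT) //.
rewrite -{1}(add0n j) big_addn.
rewrite subSn //.
apply: congr_big_nat => // k /andP[_ hk].
rewrite mulnA; congr (_ * _ * h _); first by rewrite addnK.
by lia.
Qed.

Lemma segner_gen n r : conv (fun k => Kr k 0) (fun j => Kr j r) n = Kr n r.+1.
Proof.
elim: n {-2}n (leqnn n) r => [|N IH] n hn r.
  by move: hn; rewrite leqn0 => /eqP ->; rewrite /conv big_nat1 /= mul1n.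
case: n hn => [|n] hn; first exact: IH.
have IHn : forall m r, m <= n -> conv (fun k => Kr k 0) (fun j => Kr j r) m = Kr m r.+1.
  by move=> m r' hm; apply: IH; lia.
rewrite /conv big_nat_recl // subn0 Kr_R1.
have -> : Kr 0 0 = 1 by [].
rewrite mul1n; congr (_ + _).
transitivity (conv (conv (fun k => Kr k 0) (fun k => Kr k 0)) (fun j => Kr j r) n).
  rewrite /conv; apply: congr_big_nat => // k /andP[_ hk].
  by rewrite subSS Kr_R0 -(IHn k 0) //; lia.
rewrite conv_assoc.
rewrite (@eq_conv _ (fun k => Kr k 0) _ (fun j => Kr j r.+1)) //.
  exact: IHn.
by move=> k hk; apply: IHn.
Qed.

Lemma Kr_catalan n : Kr n 0 = catalan n.
Proof.
rewrite /catalan; case: n => [|n]; first by rewrite bin0.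
rewrite /Kr addn0.
have e := mul_bin_left (n.*2.+2) n.
have -> : n.+1.*2 = n.*2.+2 by rewrite doubleS.
have h2 : n.*2.+2 - n = n.+2 by lia.
rewrite h2 in e.
have m := @bin_mono (n.*2.+2) n ltac:(lia).
have h : 'C(n.*2.+2, n.+1) = ('C(n.*2.+2, n.+1) - 'C(n.*2.+2, n)) * n.+2 by nia.
by rewrite {2}h mulnK.
Qed.


Definition cond (w : seq nat) (k : nat) : bool :=
  (nth 0 w k <= foldr maxn 0 (take k w)) ==>
  all (fun y => y \in take k.+1 w)
      (iota (nth 0 w k) ((foldr maxn 0 (take k w)).+1 - nth 0 w k)).

Definition gl (w : seq nat) := all (cond w) (iota 0 (size w)).

Lemma lemax v s : 0 < v -> (v <= foldr maxn 0 s) = has (leq v) s.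
Proof.
move=> hv; elim: s => [|x s IH] /=; first by rewrite leqNgt hv.
by rewrite leq_max IH.
Qed.

Lemma geqmax v s : (foldr maxn 0 s <= v) = all (fun x => x <= v) s.
Proof. by elim: s => [|x s IH] //=; rewrite geq_max IH. Qed.

Lemma condP w k : 0 < nth 0 w k ->
  reflect (forall y, nth 0 w k <= y -> has (leq y) (take k w) -> y \in take k.+1 w)
          (cond w k).
Proof.
rewrite /cond; set x := nth 0 w k; set M := foldr maxn 0 _ => hx.
apply: (iffP idP).
  move=> h y hxy hy.
  have hyM : y <= M by rewrite /M lemax //; lia.
  have hxM : x <= M by lia.
  move: h; rewrite hxM /= => /allP; apply; rewrite mem_iota; lia.
move=> h; apply/implyP => hxM; apply/allP => y; rewrite mem_iota => /andP[h1 h2].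
apply: h => //; rewrite -lemax //; lia.
Qed.

Lemma take_cat_size (p s : seq nat) n : take (size p + n) (p ++ s) = p ++ take n s.
Proof. by elim: p => //= x p ->. Qed.

Lemma nth_cat_size (p s : seq nat) n : nth 0 (p ++ s) (size p + n) = nth 0 s n.
Proof. by elim: p => //= x p. Qed.

Lemma gl_split a k l p r : 0 < a -> perm_eq p (iota a.+1 k) ->
  perm_eq r (iota (a + k).+1 l) -> gl (p ++ a :: r) = gl p && gl r.
Proof.
move=> ha hp hr.
have sp : size p = k by rewrite (perm_size hp) size_iota.
have sr : size r = l by rewrite (perm_size hr) size_iota.
have mp : forall z, z \in p -> a < z <= a + k.
  by move=> z; rewrite (perm_mem hp) mem_iota; lia.
have mr : forall z, z \in r -> a + k < z <= a + k + l.
  by move=> z; rewrite (perm_mem hr) mem_iota; lia.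
rewrite /gl size_cat /= sp sr.
rewrite iotaD add0n /= -[k.+1]addn0 iotaDl all_cat /= all_map.
have A : all (cond (p ++ a :: r)) (iota 0 k) = all (cond p) (iota 0 k).
  apply: eq_in_all => i; rewrite mem_iota => /andP[_ hi] /=.
  rewrite /cond nth_cat sp hi !takel_cat ?sp //; lia.
have B : cond (p ++ a :: r) k.
  have hx0 : nth 0 (p ++ a :: r) k = a by rewrite nth_cat sp ltnn subnn.
  apply/(condP (_ : 0 < _)); rewrite hx0 //.
  move=> y hay; rewrite -{1}sp -[size p]addn0 take_cat_size take0 cats0.
  rewrite -sp -addn1 take_cat_size /= mem_cat in_cons.
  case/hasP=> z zp hyz.
  case: (ltngtP a y) => hy; last by rewrite /= orbT.
    by rewrite (perm_mem hp) orbC /= mem_iota; have := mp _ zp; lia.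
  lia.
have C : all (preim (addn k.+1) (cond (p ++ a :: r))) (iota 0 l) = all (cond r) (iota 0 l).
  apply: eq_in_all => i; rewrite mem_iota => /andP[_ hi] /=.
  have hx : nth 0 (p ++ a :: r) (k.+1 + i) = nth 0 r i.
    by rewrite -sp addSnnS nth_cat_size.
  have hir : i < size r by rewrite sr.
  have hxr : a + k < nth 0 r i by case/andP: (mr _ (mem_nth 0 hir)).
  have h1 : 0 < nth 0 (p ++ a :: r) (k.+1 + i) by rewrite hx; lia.
  have h2 : 0 < nth 0 r i by lia.
  have t1 : take (k.+1 + i) (p ++ a :: r) = p ++ a :: take i r.
    by rewrite -sp addSnnS take_cat_size.
  have t2 : take (k.+1 + i).+1 (p ++ a :: r) = p ++ a :: take i.+1 r.
    by rewrite -sp -addnS addSnnS take_cat_size.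
  apply/(sameP (condP h1)).
  apply/(iffP (condP h2)).
  + move=> h y; rewrite hx t1 t2 => hy.
    rewrite has_cat /= mem_cat in_cons.
    case/orP.
      by case/hasP=> z /mp; lia.
    case/orP; first by lia.
    by move=> hh; rewrite (h y hy hh) !orbT.
  + move=> h y hy hh.
    have := h y; rewrite hx t1 t2 => /(_ hy).
    rewrite has_cat /= hh !orbT mem_cat in_cons.
    move=> /(_ isT); case/orP.
      by move/mp; lia.
    by case/orP=> // /eqP; lia.
by rewrite A B C.
Qed.

Fixpoint vpf (f a m : nat) : seq (seq nat) :=
  if f is f'.+1 then
    if m is m'.+1 then
      flatten [seq [seq p ++ a :: r | p <- vpf f' a.+1 k, r <- vpf f' (a + k).+1 (m' - k)]
              | k <- iota 0 m]
    else [:: [::]]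
  else [:: [::]].

Lemma vpfS f a m' : vpf f.+1 a m'.+1 =
  flatten [seq [seq p ++ a :: r | p <- vpf f a.+1 k, r <- vpf f (a + k).+1 (m' - k)]
              | k <- iota 0 m'.+1].
Proof. by []. Qed.

Lemma perm_split a k m' p r : k <= m' -> perm_eq p (iota a.+1 k) ->
  perm_eq (p ++ a :: r) (iota a m'.+1) = perm_eq r (iota (a + k).+1 (m' - k)).
Proof.
move=> hk hp.
have -> : iota a m'.+1 = a :: (iota a.+1 k ++ iota (a + k).+1 (m' - k)).
  by rewrite /= -addSn -iotaD subnKC.
rewrite -cat1s perm_catCA /= perm_cons.
by rewrite (perm_catr _ hp) perm_cat2l.
Qed.

Lemma vpf_mem f a m w : m <= f -> 0 < a ->
  (w \in vpf f a m) = perm_eq w (iota a m) && gl w.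
Proof.
elim: f a m w => [|f IH] a m w hm ha.
  move: hm; rewrite leqn0 => /eqP -> /=; rewrite inE.
  apply/eqP/idP => [->|/andP[/perm_nilP -> _]] //.
case: m hm => [|m'] hm.
  rewrite /= inE; apply/eqP/idP => [->|/andP[/perm_nilP -> _]] //.
rewrite vpfS; apply/idP/idP.
  case/flattenP=> s /mapP[k hk ->] /allpairsP[[p r] [/= hp hr ->]].
  move: hk; rewrite mem_iota add0n ltnS => hk.
  move: hp; rewrite IH ?ha //; last by lia.
  case/andP=> hp glp.
  move: hr; rewrite IH //; last by lia.
  case/andP=> hr glr.
  by rewrite (perm_split _ hk hp) hr (gl_split ha hp hr) glp glr.
case/andP=> hw glw.
have uw : uniq w by rewrite (perm_uniq hw) iota_uniq.
have aw : a \in w by rewrite (perm_mem hw) mem_iota leqnn /=; lia.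
set k := index a w.
have ew : w = take k w ++ a :: drop k.+1 w.
  have hd : drop k w = a :: drop k.+1 w by rewrite (drop_nth 0) ?index_mem // nth_index.
  by rewrite -hd cat_take_drop.
have szw : size w = m'.+1 by rewrite (perm_size hw) size_iota.
have hk : k <= m' by have := index_mem a w; rewrite aw szw ltnS.
have nk : nth 0 w k = a by rewrite nth_index.
set p := take k w in ew *; set r := drop k.+1 w in ew *.
have sp : size p = k by rewrite size_take szw ltnS hk.
clearbody p r.
have up : uniq p by move: uw; rewrite ew cat_uniq => /and3P[].
have anp : a \notin p.
  move: uw; rewrite ew cat_uniq => /and3P[_ hh _]; apply: contra hh => hap.
  by apply/hasP; exists a; rewrite ?inE ?eqxx.
have mp : forall z, z \in p -> a < z <= a + m'.
  move=> z zp; have : z \in w by rewrite ew mem_cat zp.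
  rewrite (perm_mem hw) mem_iota => /andP[h1 h2].
  have : z != a by apply: contraNneq anp => <-.
  lia.
have cw : cond w k by move/allP: glw; apply; rewrite mem_iota /= szw ltnS.
have tk : take k.+1 w = p ++ [:: a].
  by rewrite ew -sp -addn1 take_cat_size /= take0.
have tk0 : take k w = p by rewrite ew -sp -[size p]addn0 take_cat_size take0 cats0.
have ha' : 0 < nth 0 w k by rewrite nk.
move/(condP ha'): cw; rewrite nk tk tk0 => cw.
set M := foldr maxn 0 p.
have pM : forall z, z \in p -> z <= M.
  move=> z zp; have : all (fun x => x <= M) p by rewrite -geqmax.
  by move/allP; apply.
have hpM : perm_eq p (iota a.+1 (M - a)).
  apply: uniq_perm => //; first exact: iota_uniq.
  move=> z; rewrite mem_iota; apply/idP/idP.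
    by move=> zp; have := mp _ zp; have := pM _ zp; lia.
  move=> hz; have : z \in p ++ [:: a].
    apply: cw; first by lia.
    by rewrite -lemax; lia.
  by rewrite mem_cat inE => /orP[] // /eqP; lia.
have hp : perm_eq p (iota a.+1 k).
  by rewrite -sp (perm_size hpM) size_iota.
move: hw; rewrite ew (perm_split _ hk hp) => hr.
move: glw; rewrite ew (gl_split ha hp hr) => /andP[glp glr].
apply/flattenP; exists [seq p ++ a :: r | p <- vpf f a.+1 k, r <- vpf f (a + k).+1 (m' - k)].
  by apply/mapP; exists k => //; rewrite mem_iota; lia.
apply/allpairsP; exists (p, r); split => //=.
  by rewrite IH ?hp ?glp //; lia.
by rewrite IH ?hr ?glr //; lia.
Qed.

Lemma vpf_size f a m : m <= f -> size (vpf f a m) = Kr m 0.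
Proof.
elim: f a m => [|f IH] a m hm.
  by move: hm; rewrite leqn0 => /eqP ->.
case: m hm => [|m'] hm; first by [].
rewrite vpfS size_flatten /shape -map_comp sumnE big_map Kr_R0 -segner_gen /conv.
rewrite /index_iota subn0 in IH *.
rewrite big_seq_cond [RHS]big_seq_cond.
apply: eq_bigr => k /andP[]; rewrite mem_iota /= => hk _.
by rewrite size_allpairs !IH //; lia.
Qed.

Lemma uniq_flatten_map (T U : eqType) (F : T -> seq U) s : uniq s ->
  (forall x, x \in s -> uniq (F x)) ->
  (forall x y z, x \in s -> y \in s -> z \in F x -> z \in F y -> x = y) ->
  uniq (flatten (map F s)).
Proof.
elim: s => [|x s IH] //= /andP[xs us] hu hd.
rewrite cat_uniq hu ?inE ?eqxx // IH //; last first.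
- by move=> x' y z hx hy; apply: hd; rewrite inE ?hx ?hy orbT.
- by move=> y hy; apply: hu; rewrite inE hy orbT.
rewrite andbT; apply/hasP => -[z /flattenP[t /mapP[y ys ->] zy] zx].
have ys' : y \in x :: s by rewrite inE ys orbT.
have exy := hd x y z (mem_head _ _) ys' zx zy.
by move: xs; rewrite exy ys.
Qed.

Lemma vpf_uniq f a m : m <= f -> 0 < a -> uniq (vpf f a m).
Proof.
elim: f a m => [|f IH] a m hm ha.
  by move: hm; rewrite leqn0 => /eqP ->.
case: m hm => [|m'] hm; first by [].
have key : forall k z, k <= m' -> z \in [seq p ++ a :: r | p <- vpf f a.+1 k, r <- vpf f (a + k).+1 (m' - k)] -> index a z = k.
  move=> k z hk /allpairsP[[p r] [/= hp _ ->]].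
  move: hp; rewrite vpf_mem //; last by lia.
  case/andP=> hp _.
  have anp : a \notin p by rewrite (perm_mem hp) mem_iota ltnn.
  by rewrite index_cat (negbTE anp) /= eqxx addn0 (perm_size hp) size_iota.
rewrite vpfS; apply: uniq_flatten_map; first exact: iota_uniq.
  move=> k; rewrite mem_iota /= => hk.
  apply: allpairs_uniq; rewrite ?IH //; try lia.
  move=> [p r] [p' r'] /allpairsP[[p1 r1] [/= hp1 _ [-> ->]]] /allpairsP[[p2 r2] [/= hp2 _ [-> ->]]] /=.
  move: hp1 hp2; rewrite !vpf_mem //; try lia.
  case/andP=> hp1 _; case/andP=> hp2 _ /eqP.
  rewrite eqseq_cat; last by rewrite (perm_size hp1) (perm_size hp2) !size_iota.
  by case/andP=> /eqP -> /eqP [->].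
move=> k k' z; rewrite !mem_iota /= => hk hk' zk zk'.
by rewrite -(key k z) ?(key k' z) //; lia.
Qed.


Definition gtr := fun x y : nat => y < x.

Lemma lam_lt lam i j : sorted gtr lam -> i < j -> j < size lam -> nth 0 lam j < nth 0 lam i.
Proof.
move=> hs hij hj.
have tr : transitive gtr by rewrite /gtr => x y z; lia.
by apply: (sorted_ltn_nth tr 0 hs) => //; rewrite inE; lia.
Qed.

Lemma zeta_nth lam k : sorted gtr lam -> k < size lam -> zeta lam (nth 0 lam k) = k.+1.
Proof.
move=> hs hk.
rewrite /zeta; set v := nth 0 lam k.
rewrite -{1}(cat_take_drop k.+1 lam) count_cat.
rewrite (@eq_in_count _ _ predT (take k.+1 lam)); last first.
  move=> x /(nthP 0) [i]; rewrite size_take => h1 <-.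
  have hi : i <= k by move: h1; case: ifP; lia.
  rewrite nth_take /= /v; last by lia.
  case: (ltngtP i k) => h3; [|lia|by rewrite h3 leqnn].
  by apply: ltnW; apply: lam_lt => //; lia.
rewrite (@eq_in_count _ _ pred0 (drop k.+1 lam)); last first.
  move=> x /(nthP 0) [i]; rewrite size_drop => h1 <-.
  rewrite /= nth_drop /v; apply/negbTE; rewrite -ltnNge; apply: lam_lt => //; [exact: ltn_addr | by rewrite -ltn_subRL].
have -> : count pred0 (drop k.+1 lam) = 0 by elim: (drop k.+1 lam).
have -> : count predT (take k.+1 lam) = size (take k.+1 lam) by elim: (take k.+1 lam) => //= ? ? ->.
by rewrite addn0 size_take; case: ifP => //; move: hk; rewrite leq_eqVlt; case/orP => [/eqP -> | ->]; rewrite ?ltnn.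
Qed.

Lemma zeta_anti lam j j' : j <= j' -> zeta lam j' <= zeta lam j.
Proof. by move=> h; apply: sub_count => x /=; apply: leq_trans. Qed.

Lemma zeta_pos lam j : 0 < j -> j <= ncols lam -> 0 < zeta lam j.
Proof.
case: lam => [|x l] hj; rewrite /ncols /=; first by rewrite leqNgt hj.
by rewrite /zeta /= => ->.
Qed.

Lemma zeta_le lam j : zeta lam j <= size lam.
Proof. exact: count_size. Qed.

Lemma ent_in n lam (T : filling n lam) (a : 'I_(ncols lam)) (b : 'I_n) :
  ent T a.+1 b.+1 = T (a, b).
Proof.
rewrite /ent /=.
case: insubP => [a' _ ea|]; last by rewrite ltn_ord.
case: insubP => [b' _ eb|]; last by rewrite ltn_ord.
have e1 : a' = a :> 'I_(ncols lam) by apply: val_inj.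
have e2 : b' = b :> 'I_n by apply: val_inj.
by rewrite e1 e2.
Qed.

Lemma ent_out n lam (T : filling n lam) j i :
  ~~ [&& 0 < j, 0 < i, j <= ncols lam & i <= n] -> ent T j i = 0.
Proof.
rewrite /ent => h.
case: ifP => // /andP[hj hi].
case: insubP => [a' ha _|] //; case: insubP => [b' hb _|] //.
move: h; rewrite hj hi /=.
have : j.-1 < ncols lam by [].
have : i.-1 < n by [].
lia.
Qed.

Definition G n lam (w : seq nat) : filling n lam :=
  [ffun p : 'I_(ncols lam) * 'I_n => inord (if isbox lam p.1.+1 p.2.+1
                    then nth 0 (sort leq (take (zeta lam p.1.+1) w)) p.2 else 0)].

Lemma nth_le_n (s : seq nat) n k : all (fun x => x <= n) s -> nth 0 s k <= n.
Proof.
move=> /allP h; case: (ltnP k (size s)) => hk; first exact/h/mem_nth.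
by rewrite nth_default.
Qed.

Lemma all_sort_take n (w : seq nat) q : all (fun x => x <= n) w ->
  all (fun x => x <= n) (sort leq (take q w)).
Proof.
move=> /allP h; apply/allP => x; rewrite mem_sort => /mem_take; exact: h.
Qed.

Lemma entG n lam w j i : size lam = n -> all (fun x => x <= n) w ->
  ent (G n lam w) j i =
  if isbox lam j i then nth 0 (sort leq (take (zeta lam j) w)) i.-1 else 0.
Proof.
move=> hs hw.
case h: [&& 0 < j, 0 < i, j <= ncols lam & i <= n]; last first.
  rewrite ent_out ?h //; case: ifP => // /and4P[h1 h2 h3 h4].
  move: h; have := zeta_le lam j; rewrite hs h1 h2 h3 /=; lia.
move: h => /and4P[hj hi hjn hin].
have ha : j.-1 < ncols lam by lia.
have hb : i.-1 < n by lia.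
have -> : j = (Ordinal ha).+1 by rewrite /=; lia.
have -> : i = (Ordinal hb).+1 by rewrite /=; lia.
rewrite ent_in ffunE /= inordK //.
case: ifP => // _; rewrite ltnS; apply: nth_le_n; exact: all_sort_take.
Qed.

Lemma colsetG n lam w j : size lam = n -> size w = n -> all (fun x => x <= n) w ->
  0 < j -> j <= ncols lam -> colset (G n lam w) j = sort leq (take (zeta lam j) w).
Proof.
move=> hs sw hw hj hjn.
rewrite /colset; set s := sort leq _.
have ss : size s = zeta lam j by rewrite size_sort size_takel // sw -hs zeta_le.
rewrite -[in RHS](mkseq_nth 0 s) /mkseq ss.
rewrite (_ : iota 1 _ = map (addn 1) (iota 0 (zeta lam j))); last by rewrite -iotaDl.
rewrite -map_comp; apply/eq_in_map => i; rewrite mem_iota => /andP[_ hi] /=.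
rewrite entG // add1n /isbox hj hjn /=.
by rewrite ifT.
Qed.

Lemma sub_take (w : seq nat) k m : k <= m -> {subset take k w <= take m w}.
Proof. by move=> h x; rewrite -(take_takel w h); apply: mem_take. Qed.

Lemma sub_nth (s t : seq nat) i : sorted ltn s -> sorted ltn t -> {subset s <= t} ->
  i < size s -> nth 0 t i <= nth 0 s i.
Proof.
elim: t s i => [|y t IH] [|x s] i //=.
- by move=> _ _ /(_ x (mem_head _ _)).
- move=> ps pt hst hi.
  have yx : y <= x.
    have := hst x (mem_head _ _); rewrite inE => /orP[/eqP -> //|xt].
    by have /allP := order_path_min ltn_trans pt; move/(_ x xt)/ltnW.
  case: i hi => [|i] hi //=.
  apply: IH; [exact: path_sorted ps | exact: path_sorted pt | | by []].
  move=> z zs; have xz : x < z by have /allP := order_path_min ltn_trans ps; apply.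
  have := hst z; rewrite inE zs orbT => /(_ isT); rewrite inE => /orP[/eqP ez|//].
  by move: xz; rewrite ez ltnNge yx.
Qed.

Lemma sorted_sort_ltn (w : seq nat) : uniq w -> sorted ltn (sort leq w).
Proof.
by move=> u; rewrite ltn_sorted_uniq_leq sort_uniq u sort_sorted //; exact: leq_total.
Qed.

Lemma isKeyG n lam w : size lam = n -> perm_eq w (iota 1 n) -> is_key (G n lam w).
Proof.
move=> hs hw.
have uw : uniq w by rewrite (perm_uniq hw) iota_uniq.
have sw : size w = n by rewrite (perm_size hw) size_iota.
have mw : forall x, x \in w -> 0 < x <= n by move=> x; rewrite (perm_mem hw) mem_iota; lia.
have aw : all (fun x => x <= n) w by apply/allP => x /mw; lia.
have st : forall q, sorted ltn (sort leq (take q w)).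
  by move=> q; apply: sorted_sort_ltn; apply: take_uniq.
have szs : forall j, size (sort leq (take (zeta lam j) w)) = zeta lam j.
  by move=> j; rewrite size_sort size_takel // sw -hs zeta_le.
apply/andP; split; last first.
  apply/forallP => l; apply/forallP => j; apply/implyP => /and3P[h1 h2 h3].
  rewrite !colsetG //; try lia.
  apply/allP => x; rewrite !mem_sort; apply: sub_take; exact: zeta_anti.
apply/and3P; split.
- apply/forallP => -[a b]; rewrite ffunE /= inordK; last first.
    by rewrite ltnS; case: ifP => // _; apply: nth_le_n; apply: all_sort_take.
  case: ifP => hb; last by rewrite eqxx.
  have hlt : b < size (sort leq (take (zeta lam a.+1) w)) by rewrite szs; case/and4P: hb.
  have := mem_nth 0 hlt; rewrite mem_sort => /mem_take /mw.
  by case: (nth _ _ _).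
- apply/forallP => j; apply/forallP => i; apply/implyP => hb.
  have [hi0|hi] := posnP i; first by rewrite hi0 orbT.
  rewrite !entG // hb.
  have hb' : isbox lam j i by move: hb; rewrite /isbox; case/and4P => -> -> _ /= h; rewrite hi /=; lia.
  rewrite hb' /=; apply/orP; left.
  have hlt : i < size (sort leq (take (zeta lam j) w)) by rewrite szs; case/and4P: hb.
  have := sorted_ltn_nth ltn_trans 0 (st (zeta lam j)); apply; rewrite ?inE //; lia.
- apply/forallP => j; apply/forallP => i; apply/implyP => hb.
  have [hj0|hj] := posnP j; first by rewrite hj0 orbT.
  apply/orP; left.
  have [hi0|hi] := posnP i.
    by rewrite hi0 (@ent_out _ _ _ j 0) //= andbF.
  have hb' : isbox lam j i.
    move: hb; rewrite /isbox; case/and4P => _ h2 h3 h4; rewrite hj h3 /=.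
    apply/andP; split; first by lia.
    by apply: leq_trans h4 (zeta_anti _ (leqnSn _)).
  rewrite !entG // hb hb'.
  apply: sub_nth; [exact: st | exact: st | | ].
    by move=> x; rewrite !mem_sort; apply: sub_take; apply: zeta_anti.
  by rewrite szs; case/and4P: hb => _ _; lia.
Qed.

Lemma ncols_ge lam k : sorted gtr lam -> k < size lam -> nth 0 lam k <= ncols lam.
Proof.
move=> hs hk; rewrite /ncols; case: k hk => [//|k] hk.
by apply: ltnW; apply: lam_lt.
Qed.

Lemma nth_pos lam k : sorted gtr lam -> k.+1 < size lam -> 0 < nth 0 lam k.
Proof. by move=> hs hk; have := lam_lt hs (ltnSn k) hk; lia. Qed.

Lemma qlistE n lam : size lam = n -> sorted gtr lam -> qlist n lam = iota 1 n.-1.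
Proof.
move=> hn hs.
apply: (irr_sorted_eq ltn_trans ltnn).
- by apply: sorted_sort_ltn; apply: undup_uniq.
- exact: iota_ltn_sorted.
move=> x; rewrite mem_sort mem_undup mem_iota; apply/mapP/idP.
  case=> j; rewrite mem_filter mem_iota => /andP[h1 h2] ->.
  have := zeta_pos (j := j) (lam := lam); lia.
move=> hx; exists (nth 0 lam x.-1); last by rewrite zeta_nth //; lia.
rewrite mem_filter zeta_nth ?mem_iota; try lia.
have := nth_pos (k := x.-1) hs; have := ncols_ge (k := x.-1) hs; lia.
Qed.

Lemma cols_mem lam q j :
  (j \in cols_of_len lam q) = [&& 1 <= j, j <= ncols lam & zeta lam j == q].
Proof. by rewrite mem_filter mem_iota andbC add1n ltnS -andbA. Qed.

Lemma cols_nth lam q : sorted gtr lam -> 0 < q -> q < size lam ->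
  nth 0 lam q.-1 \in cols_of_len lam q.
Proof.
move=> hs h1 h2; rewrite cols_mem zeta_nth; last by lia.
have a : q.-1.+1 < size lam by rewrite prednK.
have b : q.-1 < size lam by lia.
rewrite (nth_pos hs a) (ncols_ge hs b) prednK ?eqxx.
all: try done.
Qed.

Lemma vals_lenG n lam w q : size lam = n -> sorted gtr lam -> perm_eq w (iota 1 n) ->
  0 < q -> q < n -> vals_len (G n lam w) q =i take q w.
Proof.
move=> hs hl hw h1 h2.
have sw : size w = n by rewrite (perm_size hw) size_iota.
have aw : all (fun x => x <= n) w.
  by apply/allP => x; rewrite (perm_mem hw) mem_iota; lia.
move=> x; rewrite /vals_len; apply/flattenP/idP.
  case=> s /mapP[j]; rewrite cols_mem => /and3P[j1 j2 /eqP jq] -> hx.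
  by move: hx; rewrite colsetG // jq mem_sort.
move=> hx; exists (colset (G n lam w) (nth 0 lam q.-1)).
  by apply: map_f; apply: cols_nth => //; lia.
have := cols_nth hl h1 (_ : q < size lam); rewrite hs => /(_ h2).
rewrite cols_mem => /and3P[j1 j2 /eqP jq].
by rewrite colsetG // jq mem_sort.
Qed.

Lemma maxn_eq (s t : seq nat) : s =i t -> foldr maxn 0 s = foldr maxn 0 t.
Proof.
move=> h; apply/eqP; rewrite eqn_leq !geqmax.
have hs : all (fun x => x <= foldr maxn 0 s) s by rewrite -geqmax.
have ht : all (fun x => x <= foldr maxn 0 t) t by rewrite -geqmax.
apply/andP; split; apply/allP => x.
  by rewrite h => xt; move/allP: ht; apply.
by rewrite -h => xs; move/allP: hs; apply.
Qed.

Lemma all_const (T : eqType) (P : pred T) s c : s != [::] ->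
  {in s, forall x, P x = c} -> all P s = c.
Proof.
case: s => [//|x s] _ h /=; rewrite h ?mem_head //.
case: c h => h; last by [].
by apply/allP => y ys; rewrite h // inE ys orbT.
Qed.

Lemma gapless_atG n lam w h : size lam = n -> sorted gtr lam -> perm_eq w (iota 1 n) ->
  0 < h -> h.+1 < n -> gapless_at (G n lam w) h = cond w h.
Proof.
move=> hs hl hw h1 h2.
have sw : size w = n by rewrite (perm_size hw) size_iota.
have uw : uniq w by rewrite (perm_uniq hw) iota_uniq.
have aw : all (fun x => x <= n) w.
  by apply/allP => x; rewrite (perm_mem hw) mem_iota; lia.
rewrite /gapless_at qlistE // !nth_iota; try lia.
have -> : 1 + h.-1 = h by lia.
rewrite add1n.
have vh := vals_lenG hs hl hw h1 (_ : h < n); have {}vh := vh ltac:(lia).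
have vh1 := vals_lenG hs hl hw (ltn0Sn h) h2.
set L := [seq x <- _ | _].
have tn : take h.+1 w = rcons (take h w) (nth 0 w h) by rewrite (take_nth 0) // sw; lia.
have mL : forall x, x \in L -> x = nth 0 w h.
  move=> x; rewrite mem_filter vh vh1 tn mem_rcons inE => /andP[hx].
  by case/orP => [/eqP //| hx']; rewrite hx' in hx.
have nL : nth 0 w h \in L.
  rewrite mem_filter vh vh1 tn mem_rcons mem_head andbT.
  have := take_uniq h.+1 uw; rewrite tn rcons_uniq; by case/andP.
have hb : head 0 (sort leq L) = nth 0 w h.
  case e: (sort leq L) => [|y ys].
    by have := nL; rewrite -(mem_sort leq) e.
  by apply: mL; rewrite -(mem_sort leq) e mem_head.
rewrite hb (maxn_eq vh) /cond.
congr (_ ==> _); apply: all_const.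
  have := cols_nth hl (ltn0Sn h) (_ : h.+1 < size lam); rewrite hs => /(_ h2).
  by case: (cols_of_len lam h.+1).
move=> j; rewrite cols_mem => /and3P[j1 j2 /eqP jq].
rewrite colsetG // jq; apply: eq_all => y; by rewrite mem_sort.
Qed.

Lemma gaplessG n lam w : 0 < n -> size lam = n -> sorted gtr lam -> perm_eq w (iota 1 n) ->
  gapless (G n lam w) = gl w.
Proof.
move=> hn hs hl hw.
have sw : size w = n by rewrite (perm_size hw) size_iota.
have mw : forall x, (x \in w) = (0 < x <= n).
  by move=> x; rewrite (perm_mem hw) mem_iota; apply/idP/idP; lia.
rewrite /gapless /gl qlistE // size_iota sw.
rewrite (@eq_in_all _ _ (cond w)); last first.
  move=> h; rewrite mem_iota => /andP[h1 h2]; apply: gapless_atG => //; lia.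
have c0 : cond w 0.
  rewrite /cond take0 /=; apply/implyP => h0; exfalso.
  have : nth 0 w 0 \in w by apply: mem_nth; lia.
  rewrite mw; lia.
case: n hn hs sw mw hw => [//|[|n']] _ hs sw mw hw; first by rewrite /= c0.
rewrite -[n'.+2]addn1 iotaD /= all_cat addn1 /= c0 add0n andbT.
have -> : cond w n'.+1 = true; last by rewrite andbT.
rewrite /cond; apply/implyP => _; apply/allP => y.
have hx : nth 0 w n'.+1 \in w by apply: mem_nth; lia.
have hM : foldr maxn 0 (take n'.+1 w) <= n'.+2.
  rewrite geqmax; apply/allP => z /mem_take; rewrite mw; lia.
rewrite [take n'.+2 w]take_oversize ?sw // mem_iota mw.
move: hx hM; rewrite mw; set M := foldr maxn 0 _; set x := nth 0 w _; lia.
Qed.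


Lemma sorted_map_iota (f : nat -> nat) m z :
  (forall i, m <= i -> i.+1 < m + z -> f i < f i.+1) -> sorted ltn (map f (iota m z)).
Proof.
case: z => [//|z] /=.
elim: z m => [//|z IH] m h /=.
rewrite h ?leqnn //; last by lia.
by apply: IH => i h1 h2; apply: h; lia.
Qed.

Section Tab.
Variables (n : nat) (lam : seq nat) (T : filling n lam).
Hypothesis hs : size lam = n.
Hypothesis htab : is_tableau T.

Lemma ent_le j i : ent T j i <= n.
Proof.
rewrite /ent; case: ifP => // _.
case: insubP => [a _ _|//]; case: insubP => [b _ _|//].
by rewrite -ltnS.
Qed.

Lemma tab_zero (p : 'I_(ncols lam) * 'I_n) : ~~ isbox lam p.1.+1 p.2.+1 -> nat_of_ord (T p) = 0.
Proof.
move: htab => /and3P[/forallP /(_ p) h _ _] hb.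
by move: h; rewrite (negbTE hb) => /eqP/eqP; case: (nat_of_ord (T p)).
Qed.

Lemma ent_box_pos j i : isbox lam j i -> 0 < ent T j i.
Proof.
move=> hb; have := hb; case/and4P => h1 h2 h3 h4.
have ha : j.-1 < ncols lam by lia.
have hb' : i.-1 < n by have := zeta_le lam j; lia.
have ej : j = (Ordinal ha).+1 by rewrite /=; lia.
have ei : i = (Ordinal hb').+1 by rewrite /=; lia.
rewrite ej ei ent_in.
move: htab => /and3P[/forallP /(_ (Ordinal ha, Ordinal hb')) h _ _].
move: h; rewrite /= -ej -ei hb lt0n; by move/eqP.
Qed.

Lemma size_colset j : size (colset T j) = zeta lam j.
Proof. by rewrite size_map size_iota. Qed.

Lemma colset_sorted j : 0 < j -> j <= ncols lam -> sorted ltn (colset T j).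
Proof.
move=> h1 h2; apply: sorted_map_iota => i hi1 hi2.
move: htab => /and3P[_ /forallP /(_ (inord j)) /forallP /(_ (inord i)) h _].
have hj : j <= ncols lam by [].
have hin : i < n.+1 by have := zeta_le lam j; lia.
have e1 : nat_of_ord (inord j : 'I_(ncols lam).+1) = j by rewrite inordK.
have e2 : nat_of_ord (inord i : 'I_n.+1) = i by rewrite inordK.
rewrite e1 e2 in h.
have hb : isbox lam j i.+1 by rewrite /isbox; apply/and4P; split => //; lia.
by move: h; rewrite hb /= => /orP[//|/eqP]; lia.
Qed.

Lemma colset_mem j x : 0 < j -> j <= ncols lam -> x \in colset T j -> 0 < x <= n.
Proof.
move=> h1 h2 /mapP[i]; rewrite mem_iota => hi ->.
rewrite ent_le andbT; apply: ent_box_pos.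
by rewrite /isbox; apply/and4P; split => //; lia.
Qed.

Lemma colset_nth j b : b < zeta lam j -> nth 0 (colset T j) b = ent T j b.+1.
Proof. by move=> hb; rewrite (nth_map 0) ?size_iota // nth_iota. Qed.

End Tab.

Lemma key_sub n lam (T : filling n lam) l j : is_key T -> 0 < l -> l <= j -> j <= ncols lam ->
  {subset colset T j <= colset T l}.
Proof.
move=> /andP[_ /forallP /(_ (inord l)) /forallP /(_ (inord j)) h] h1 h2 h3.
have e1 : nat_of_ord (inord l : 'I_(ncols lam).+1) = l by rewrite inordK //; lia.
have e2 : nat_of_ord (inord j : 'I_(ncols lam).+1) = j by rewrite inordK //; lia.
rewrite e1 e2 h1 h2 h3 /= in h.
by move=> x xj; move/allP: h; apply.
Qed.

Lemma chain (S : nat -> seq nat) N :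
  S 0 = [::] ->
  (forall k, k <= N -> uniq (S k) /\ size (S k) = k) ->
  (forall k, k < N -> {subset S k <= S k.+1}) ->
  forall k, k <= N ->
  take k [seq head 0 [seq x <- S k.+1 | x \notin S k] | k <- iota 0 N] =i S k.
Proof.
move=> S0 hu hsub; set w := map _ _.
have sw : size w = N by rewrite size_map size_iota.
elim=> [|k IH] hk; first by rewrite take0 S0.
rewrite (take_nth 0) ?sw // (nth_map 0) ?size_iota // nth_iota // add0n.
set L := filter _ _.
have [u1 s1] := hu k (ltnW hk).
have [u2 s2] := hu k.+1 hk.
have hL : has (fun y => y \notin S k) (S k.+1).
  apply/hasPn => hn.
  have := uniq_leq_size u2 (fun y hy => negbNE (hn y hy)).
  by rewrite s1 s2 ltnn.
move: hL; rewrite has_filter -/L.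
case e: L => [//|x L'] _.
have xL : x \in L by rewrite e mem_head.
move: xL; rewrite mem_filter => /andP[xn xs].
have u3 : uniq (x :: S k) by rewrite /= xn u1.
have sub : {subset x :: S k <= S k.+1}.
  by move=> y; rewrite inE => /orP[/eqP ->//|]; apply: hsub.
have sz3 : size (S k.+1) <= size (x :: S k) by rewrite s2 /= s1.
have [_ eq3] := uniq_min_size u3 sub sz3.
move=> y; rewrite /= mem_rcons -eq3 !inE IH //; lia.
Qed.

Section KeyT.
Variables (n : nat) (lam : seq nat) (T : filling n lam).
Hypothesis hn : 0 < n.
Hypothesis hs : size lam = n.
Hypothesis hl : sorted gtr lam.
Hypothesis hkey : is_key T.

Let htab : is_tableau T. Proof. by case/andP: hkey. Qed.

Definition Sk k := if k == 0 then [::] else if k < n then colset T (nth 0 lam k.-1) else iota 1 n.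

Lemma col_bounds k : 0 < k -> k < n -> 0 < nth 0 lam k.-1 <= ncols lam.
Proof.
move=> h1 h2.
have a : k.-1.+1 < size lam by rewrite prednK // hs.
have b : k.-1 < size lam by lia.
by rewrite (nth_pos hl a) (ncols_ge hl b).
Qed.

Lemma colset_uniq j : 0 < j -> j <= ncols lam -> uniq (colset T j).
Proof. by move=> h1 h2; apply: (sorted_uniq ltn_trans ltnn); apply: colset_sorted. Qed.

Lemma Sk_us k : k <= n -> uniq (Sk k) /\ size (Sk k) = k.
Proof.
rewrite /Sk; case: eqP => [-> //|/eqP k0 hk].
case: ifP => hk'; last first.
  have -> : k = n by lia.
  by rewrite iota_uniq size_iota.
have k1 : 0 < k by rewrite lt0n.
have /andP[b1 b2] := col_bounds k1 hk'.
split; first exact: colset_uniq.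
by rewrite size_colset zeta_nth // prednK // hs.
Qed.

Lemma Sk_sub k : k < n -> {subset Sk k <= Sk k.+1}.
Proof.
move=> hk x; rewrite /Sk; case: eqP => // /eqP k0.
have k1 : 0 < k by rewrite lt0n.
rewrite ifT //=.
have /andP[b1 b2] := col_bounds k1 hk.
case: ifP => hk1.
  have /andP[c1 c2] := col_bounds (ltn0Sn k) hk1.
  apply: key_sub => //=.
  apply: ltnW; apply: lam_lt => //; [lia | rewrite hs //].
move=> xs; have := colset_mem hs htab b1 b2 xs.
by rewrite mem_iota; lia.
Qed.

Lemma colset_Sk j : 0 < j -> j <= ncols lam -> colset T j =i Sk (zeta lam j).
Proof.
move=> j1 j2.
have q1 : 0 < zeta lam j by apply: zeta_pos.
have q2 : zeta lam j <= n by rewrite -hs zeta_le.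
have u := colset_uniq j1 j2.
have sz := size_colset T j.
have [us ss] := Sk_us q2.
have sub : {subset colset T j <= Sk (zeta lam j)} \/ {subset Sk (zeta lam j) <= colset T j}.
  rewrite /Sk; case: eqP => [e|_]; first by rewrite e in q1.
  case: ifP => hq; last first.
    left => x xs; have := colset_mem hs htab j1 j2 xs; rewrite mem_iota; lia.
  have /andP[b1 b2] := col_bounds q1 hq.
  case: (leqP j (nth 0 lam (zeta lam j).-1)) => hjj.
    by right; apply: key_sub.
  by left; apply: key_sub => //; lia.
case: sub => sub.
  have szl : size (Sk (zeta lam j)) <= size (colset T j) by rewrite ss sz.
  by have [_ e] := uniq_min_size u sub szl.
have szl : size (colset T j) <= size (Sk (zeta lam j)) by rewrite ss sz.
have [_ e] := uniq_min_size us sub szl.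
by move=> x; rewrite e.
Qed.

Definition Fw := [seq head 0 [seq x <- Sk k.+1 | x \notin Sk k] | k <- iota 0 n].

Lemma take_Fw k : k <= n -> take k Fw =i Sk k.
Proof. by apply: chain => //; [exact: Sk_us | exact: Sk_sub]. Qed.

Lemma Fw_perm : perm_eq Fw (iota 1 n).
Proof.
have sF : size Fw = n by rewrite size_map size_iota.
have e : Fw =i iota 1 n.
  move=> x; rewrite -{1}(take_oversize (leqnn (size Fw))) sF take_Fw //.
  have n0 : (n == 0) = false by rewrite eqn0Ngt hn.
  by rewrite /Sk ltnn n0.
apply: uniq_perm => //; last exact: iota_uniq.
have e' : iota 1 n =i Fw by move=> x; rewrite e.
by rewrite (uniq_size_uniq (iota_uniq 1 n) e') sF size_iota.
Qed.

Lemma T_eq_G : T = G n lam Fw.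
Proof.
have hp := Fw_perm.
have sw : size Fw = n by rewrite (perm_size hp) size_iota.
have aw : all (fun x => x <= n) Fw by apply/allP => x; rewrite (perm_mem hp) mem_iota; lia.
have uw : uniq Fw by rewrite (perm_uniq hp) iota_uniq.
apply/ffunP => -[a b]; apply: val_inj; rewrite ffunE /=.
rewrite inordK; last by rewrite ltnS; case: ifP => // _; apply: nth_le_n; apply: all_sort_take.
case: ifP => hb; last by apply: tab_zero => //; rewrite hb.
have /and4P[h1 h2 h3 h4] := hb.
rewrite -ent_in -colset_nth //.
congr nth.
apply: (irr_sorted_eq ltn_trans ltnn).
- exact: colset_sorted.
- by apply: sorted_sort_ltn; apply: take_uniq.
move=> x; rewrite mem_sort colset_Sk // take_Fw //.
by rewrite -hs zeta_le.
Qed.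

End KeyT.


Lemma prefix_eq (w1 w2 : seq nat) N : size w1 = N -> size w2 = N -> uniq w1 ->
  (forall k, k <= N -> take k w1 =i take k w2) -> w1 = w2.
Proof.
move=> s1 s2 u h; apply: (eq_from_nth (x0 := 0)); first by rewrite s1 s2.
move=> i; rewrite s1 => hi.
have := h i.+1 hi (nth 0 w1 i).
rewrite !(take_nth 0) ?s1 ?s2 // !mem_rcons !inE eqxx /= => /esym.
case/orP=> [/eqP -> //|].
rewrite -h; last by lia.
have := take_uniq i.+1 u; rewrite (take_nth 0) ?s1 // rcons_uniq.
by case/andP => /negbTE ->.
Qed.

Lemma Sk_G n lam w k : 0 < n -> size lam = n -> sorted gtr lam -> perm_eq w (iota 1 n) ->
  k <= n -> Sk (G n lam w) k =i take k w.
Proof.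
move=> hn hs hl hw hk.
have sw : size w = n by rewrite (perm_size hw) size_iota.
have aw : all (fun x => x <= n) w by apply/allP => x; rewrite (perm_mem hw) mem_iota; lia.
move=> x; rewrite /Sk; case: eqP => [->|/eqP k0]; first by rewrite take0.
case: ifP => hk'.
  have k1 : 0 < k by rewrite lt0n.
  have /andP[b1 b2] := @col_bounds n lam (G n lam w) hn hs hl (isKeyG hs hw) k k1 hk'.
  by rewrite colsetG // zeta_nth // ?prednK // ?mem_sort // hs.
have -> : k = n by lia.
by rewrite take_oversize ?sw // (perm_mem hw).
Qed.

Lemma G_inj n lam w1 w2 : 0 < n -> size lam = n -> sorted gtr lam ->
  perm_eq w1 (iota 1 n) -> perm_eq w2 (iota 1 n) -> G n lam w1 = G n lam w2 -> w1 = w2.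
Proof.
move=> hn hs hl h1 h2 e.
apply: (@prefix_eq _ _ n).
- by rewrite (perm_size h1) size_iota.
- by rewrite (perm_size h2) size_iota.
- by rewrite (perm_uniq h1) iota_uniq.
move=> k hk x; rewrite -(Sk_G hn hs hl h1 hk) -(Sk_G hn hs hl h2 hk) e //.
Qed.

Theorem corollary5p3 (n : nat) (lam : seq nat) :
  1 <= n -> size lam = n -> sorted (fun x y => y < x) lam ->
  #|[set T : filling n lam | is_key T && gapless T]| = catalan n.
Proof.
move=> hn hs hl.
set V := vpf n 1 n.
have memV : forall w, (w \in V) = perm_eq w (iota 1 n) && gl w.
  by move=> w; rewrite vpf_mem.
have uV : uniq V by apply: vpf_uniq.
have sV : size V = catalan n by rewrite vpf_size // Kr_catalan.
set L := map (G n lam) V.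
have uL : uniq L.
  rewrite map_inj_in_uniq // => w1 w2; rewrite !memV => /andP[h1 _] /andP[h2 _].
  exact: G_inj.
rewrite -sV -(size_map (G n lam)) -/L.
rewrite -(card_uniqP uL).
apply: eq_card => T; rewrite inE; apply/idP/idP.
  case/andP=> hk hg.
  have e := T_eq_G hn hs hl hk.
  apply/mapP; exists (Fw T) => //.
  rewrite memV (Fw_perm hn hs hl hk) /= -(gaplessG hn hs hl (Fw_perm hn hs hl hk)) -e //.
case/mapP=> w; rewrite memV => /andP[hw gw] ->.
by rewrite isKeyG // gaplessG.
Qed.
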